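(* Let $H\in M_{M\times N}(\mathbb T)$ be a partial Hadamard matrix with rows $R_1,\ldots,R_M$ such that the projections $P_{ij}=\mathrm{Proj}(R_i/R_j)$ pairwise commute. Let $\mathcal A\subset M_N(\mathbb C)$ be the unital algebra generated by the $P_{ij}$, and write $\mathcal A=C(S)$ with $S\subset\widetilde S_M$, where each character $\chi$ of $\mathcal A$ corresponds to the partial permutation $\sigma$ with $\sigma(j)=i\iff\chi(P_{ij})=1$. Then the quantum semigroup $G$ associated to $H$ is the subsemigroup $\langle S\rangle\subset\widetilde S_M$ generated by $S$, i.e. the bialgebra image of $\pi_H$ is $C(\langle S\rangle)$, with $u_{ij}$ mapped to the function $\sigma\mapsto1$ if $\sigma(j)=i$ and $0$ otherwise.
   Context: A partial Hadamard matrix is $H\in M_{M\times N}(\mathbb T)$ with pairwise orthogonal rows; $R_i/R_j$ is entrywise division; $\mathrm{Proj}(\xi)$ is the orthogonal projection onto $\mathbb C\xi$. $\widetilde S_M$ is the semigroup of partial permutations (bijections $X\to Y$, $X,Y\subset\{1,\ldots,M\}$) with product $(\sigma\tau)(j)=\sigma(\tau(j))$ when defined. $\widetilde{\mathcal A}_s(M)$ is the unital $*$-algebra generated by the entries $u_{ij}$ of the universal $M\times M$ submagic matrix (entries are projections, pairwise orthogonal on rows and on columns), with comultiplication $\Delta(u_{ij})=\sum_k u_{ik}\otimes u_{kj}$; $\pi_H:\widetilde{\mathcal A}_s(M)\to M_N(\mathbb C)$ is given by $u_{ij}\mapsto P_{ij}$. The bialgebra image of $\pi_H$ (whose algebra is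 written $C(G)$) is the minimal factorization $\pi_H=\rho\circ q$ with $q$ a surjective comultiplication-preserving unital $*$-homomorphism onto a unital $*$-algebra with comultiplication, minimal in the sense that every other such factorization maps uniquely onto it compatibly with the quotient maps. $C(\langle S\rangle)$ carries the comultiplication $\Delta(f)(\sigma,\tau)=f(\sigma\tau)$. *)

(* Defs.v *)
From mathcomp Require Import all_boot all_algebra reals.
From mathcomp.real_closed Require Import complex.
Set Implicit Arguments. Unset Strict Implicit. Unset Printing Implicit Defensive.
Import GRing.Theory Num.Theory.
Local Open Scope ring_scope.

Section Defs.
Variables (R : realType) (M N : nat).
Local Notation C := R[i].

Definition partial_hadamard (H : 'M[C]_(M, N)) : Prop :=
  (forall i a, `|H i a| = 1) /\
  (forall i k : 'I_M, i != k -> \sum_a H i a * (H k a)^* = 0).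

Definition Proj (xi : 'cV[C]_N) : 'M[C]_N :=
  (\sum_a `|xi a ord0| ^+ 2)^-1 *: (xi *m (map_mx Num.conj xi)^T).

Definition row_ratio (H : 'M[C]_(M, N)) (i j : 'I_M) : 'cV[C]_N :=
  \col_a (H i a / H j a).

Definition Pij (H : 'M[C]_(M, N)) (i j : 'I_M) : 'M[C]_N := Proj (row_ratio H i j).

(** Free unital *-algebra on the (self-adjoint) generators u_ij:
    words in the letters (i,j), elements as formal finite linear combinations. *)
Definition word := seq ('I_M * 'I_M).
Definition fsum := seq (C * word).

Definition fcoef (a : fsum) (w : word) : C := \sum_(x <- a | x.2 == w) x.1.
Definition fsEq (a b : fsum) : Prop := forall w, fcoef a w = fcoef b w.

Definition fscale (c : C) (a : fsum) : fsum := [seq (c * x.1, x.2) | x <- a].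
Definition lmulW (w : word) (a : fsum) : fsum := [seq (x.1, w ++ x.2) | x <- a].
Definition rmulW (w : word) (a : fsum) : fsum := [seq (x.1, x.2 ++ w) | x <- a].
Definition fstar (a : fsum) : fsum := [seq ((x.1)^*, rev x.2) | x <- a].

(** Tensor square of the free algebra: combinations of pairs of words. *)
Definition tsum := seq (C * (word * word)).
Definition tcoef (t : tsum) (p : word * word) : C := \sum_(x <- t | x.2 == p) x.1.
Definition tEq (s t : tsum) : Prop := forall p, tcoef s p = tcoef t p.

Definition tensL (w : word) (b : fsum) : tsum := [seq (x.1, (w, x.2)) | x <- b].
Definition tensR (b : fsum) (w : word) : tsum := [seq (x.1, (x.2, w)) | x <- b].

(** Comultiplication Delta(u_ij) = sum_k u_ik (x) u_kj, extended multiplicatively. *)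
Fixpoint allseqs (n : nat) : seq (seq 'I_M) :=
  if n is n'.+1 then [seq k :: s | k <- enum 'I_M, s <- allseqs n'] else [:: [::]].

Definition deltaW (w : word) : tsum :=
  [seq (1, ([seq (x.1.1, x.2) | x <- zip w ks], [seq (x.2, x.1.2) | x <- zip w ks]))
  | ks <- allseqs (size w)].

Definition deltaF (a : fsum) : tsum :=
  flatten [seq [seq (x.1 * y.1, y.2) | y <- deltaW x.2] | x <- a].

Definition piW (H : 'M[C]_(M, N)) (w : word) : 'M[C]_N :=
  foldr (fun x acc => Pij H x.1 x.2 *m acc) 1%:M w.
Definition piF (H : 'M[C]_(M, N)) (a : fsum) : 'M[C]_N :=
  \sum_(x <- a) x.1 *: piW H x.2.

Definition inAlgP (H : 'M[C]_(M, N)) (X : 'M[C]_N) : Prop := exists a, X = piF H a.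

Definition character (H : 'M[C]_(M, N)) (chi : 'M[C]_N -> C) : Prop :=
  chi 1%:M = 1 /\
  (forall X Y, inAlgP H X -> inAlgP H Y -> chi (X + Y) = chi X + chi Y) /\
  (forall c X, inAlgP H X -> chi (c *: X) = c * chi X) /\
  (forall X Y, inAlgP H X -> inAlgP H Y -> chi (X *m Y) = chi X * chi Y).

Definition pmapM := {ffun 'I_M -> option 'I_M}.
Definition is_pperm (s : pmapM) : Prop :=
  forall j k i, s j = Some i -> s k = Some i -> j = k.
Definition ppcomp (s t : pmapM) : pmapM := [ffun j => obind s (t j)].

Definition charS (H : 'M[C]_(M, N)) (s : pmapM) : Prop :=
  is_pperm s /\ exists chi, character H chi /\
    (forall i j, s j = Some i <-> chi (Pij H i j) = 1).

Definition gen_sg (S : pmapM -> Prop) (s : pmapM) : Prop :=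
  exists (s0 : pmapM) (l : seq pmapM),
    S s0 /\ (forall t, t \in l -> S t) /\ s = foldl ppcomp s0 l.

(** Phi : u_ij |-> (sigma |-> [sigma(j) = i]), into functions on partial maps
    (only their values on <S> matter: C(<S>)). *)
Definition phiW (w : word) (s : pmapM) : C :=
  \prod_(x <- w) (if s x.2 == Some x.1 then 1 else 0).
Definition phiF (a : fsum) (s : pmapM) : C := \sum_(x <- a) x.1 * phiW x.2 s.
Definition phi2 (t : tsum) (s u : pmapM) : C :=
  \sum_(x <- t) x.1 * phiW x.2.1 s * phiW x.2.2 u.

(** Kernels of factorizations of pi_H through tilde A_s(M) by surjective
    comultiplication-preserving unital *-morphisms, seen in the free algebra:
    *-ideals containing the submagic relations, which are coideals
    (Delta(I) in I (x) F + F (x) I = ker (q (x) q)) and lie in ker pi_H. *)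
Definition factor_kernel (H : 'M[C]_(M, N)) (I : fsum -> Prop) : Prop :=
  (forall a b, fsEq a b -> I a -> I b) /\
  I [::] /\
  (forall a b, I a -> I b -> I (a ++ b)) /\
  (forall c a, I a -> I (fscale c a)) /\
  (forall w a, I a -> I (lmulW w a) /\ I (rmulW w a)) /\
  (forall a, I a -> I (fstar a)) /\
  (forall i j : 'I_M, I [:: (1, [:: (i, j); (i, j)]); (-1, [:: (i, j)])]) /\
  (forall i j k : 'I_M, j != k -> I [:: (1, [:: (i, j); (i, k)])]) /\
  (forall i j k : 'I_M, i != k -> I [:: (1, [:: (i, j); (k, j)])]) /\
  (forall a, I a -> exists (L : seq (word * fsum)) (Rr : seq (fsum * word)),
      (forall p, p \in L -> I p.2) /\ (forall p, p \in Rr -> I p.1) /\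
      tEq (deltaF a) (flatten [seq tensL p.1 p.2 | p <- L] ++
                      flatten [seq tensR p.1 p.2 | p <- Rr])) /\
  (forall a, I a -> piF H a = 0).

End Defs.

(* Main.v *)
Require Import Defs.
From mathcomp Require Import all_boot all_algebra reals.
From mathcomp.real_closed Require Import complex.
Set Implicit Arguments. Unset Strict Implicit. Unset Printing Implicit Defensive.
Import GRing.Theory Num.Theory.
Local Open Scope ring_scope.

Section Phi.
Variables (R : realType) (M : nat).
Local Notation C := R[i].
Implicit Types (s t u : pmapM M) (w : word M) (a b : fsum R M).

Lemma phiW_cons x w s : phiW R (x :: w) s =
  (if s x.2 == Some x.1 then 1 else 0) * phiW R w s.
Proof. by rewrite /phiW big_cons. Qed.

Lemma phiW_cat w1 w2 s : phiW R (w1 ++ w2) s = phiW R w1 s * phiW R w2 s.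
Proof. by rewrite /phiW big_cat. Qed.

Lemma phiW01 w s : phiW R w s = 0 \/ phiW R w s = 1.
Proof.
elim: w => [|x w IH]; first by right; rewrite /phiW big_nil.
rewrite phiW_cons; case: eqP => _; last by left; rewrite mul0r.
by rewrite mul1r.
Qed.

Lemma phiW_rev w s : phiW R (rev w) s = phiW R w s.
Proof. by rewrite /phiW; apply: perm_big; rewrite (perm_rev w). Qed.

Lemma phiF_nil s : phiF [::] s = 0 :> C.
Proof. by rewrite /phiF big_nil. Qed.

Lemma phiF_cons x a s : phiF (x :: a) s = x.1 * phiW R x.2 s + phiF a s.
Proof. by rewrite /phiF big_cons. Qed.

Lemma phiF_cat a b s : phiF (a ++ b) s = phiF a s + phiF b s.
Proof. by rewrite /phiF big_cat. Qed.

Lemma phiF_flatten (l : seq (fsum R M)) s :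
  phiF (flatten l) s = \sum_(b <- l) phiF b s.
Proof.
elim: l => [|b l IH]; first by rewrite big_nil /= phiF_nil.
by rewrite /= phiF_cat IH big_cons.
Qed.

Lemma phiF_scale c a s : phiF (fscale c a) s = c * phiF a s.
Proof.
rewrite /phiF /fscale big_map mulr_sumr; apply: eq_bigr => x _ /=.
by rewrite mulrA.
Qed.

Lemma phiF_lmul w a s : phiF (lmulW w a) s = phiW R w s * phiF a s.
Proof.
rewrite /phiF /lmulW big_map mulr_sumr; apply: eq_bigr => x _ /=.
by rewrite phiW_cat mulrCA.
Qed.

Lemma phiF_rmul w a s : phiF (rmulW w a) s = phiF a s * phiW R w s.
Proof.
rewrite /phiF /rmulW big_map mulr_suml; apply: eq_bigr => x _ /=.
by rewrite phiW_cat mulrA.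
Qed.

Lemma phiF_star a s : phiF (fstar a) s = (phiF a s)^*.
Proof.
rewrite /phiF /fstar big_map rmorph_sum; apply: eq_bigr => x _ /=.
rewrite rmorphM phiW_rev; congr (_ * _).
by case: (phiW01 x.2 s) => ->; rewrite ?rmorph0 ?rmorph1.
Qed.

Definition pperm_comp s t : is_pperm s -> is_pperm t -> is_pperm (ppcomp s t).
Proof.
move=> ps pt j k i; rewrite /ppcomp !ffunE.
case Ej: (t j) => [k1|] //=; case Ek: (t k) => [k2|] //= h1 h2.
have e := ps _ _ _ h1 h2; subst k2.
exact: (pt _ _ _ Ej Ek).
Qed.


Definition fmul a b : fsum R M := [seq (x.1 * y.1, x.2 ++ y.2) | x <- a, y <- b].

Lemma phiF_fmul a b s : phiF (fmul a b) s = phiF a s * phiF b s.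
Proof.
rewrite /phiF /fmul big_allpairs_dep mulr_suml; apply: eq_bigr => x _.
rewrite mulr_sumr; apply: eq_bigr => y _ /=.
by rewrite phiW_cat mulrACA.
Qed.

Definition factor s (j : 'I_M) : fsum R M :=
  match s j with
  | Some i => [:: (1, [:: (i, j)])]
  | None => (1, [::]) :: [seq (-1, [:: (i, j)]) | i <- enum 'I_M]
  end.

Lemma phiW_nil s : phiW R [::] s = 1.
Proof. by rewrite /phiW big_nil. Qed.

Lemma phiF_factor s j t : phiF (factor s j) t = if t j == s j then 1 else 0.
Proof.
rewrite /factor; case: (s j) => [i|].
  by rewrite phiF_cons phiF_nil phiW_cons phiW_nil /= !mul1r mulr1 addr0.
rewrite phiF_cons phiW_nil mul1r /phiF big_map /=.
case E: (t j) => [k|] /=.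
  rewrite (bigD1_seq k) ?mem_enum ?enum_uniq //= phiW_cons phiW_nil /= E eqxx.
  rewrite big1 ?addr0 ?mulr1 ?mulN1r ?subrr // => i ik.
  rewrite phiW_cons phiW_nil /= E; case: eqP => [[e]|_]; first by rewrite e eqxx in ik.
  by rewrite mul0r mulr0.
rewrite big1 ?addr0 // => i _.
by rewrite phiW_cons phiW_nil /= E mul0r mulr0.
Qed.

Definition ind s : fsum R M :=
  foldr fmul [:: (1, [::])] [seq factor s j | j <- enum 'I_M].

Lemma phiF_ind s t : phiF (ind s) t = if t == s then 1 else 0.
Proof.
have -> : phiF (ind s) t = \prod_(j <- enum 'I_M) phiF (factor s j) t.
  rewrite /ind; elim: (enum 'I_M) => [|j r IH] /=.
    by rewrite big_nil phiF_cons phiF_nil phiW_nil mulr1 addr0.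
  by rewrite big_cons phiF_fmul IH.
case: eqP => [->|ne].
  by rewrite big1_seq // => j _; rewrite phiF_factor eqxx.
have [j nj] : exists j, t j != s j.
  apply/existsP; apply: contraT; rewrite negb_exists => /forallP h.
  by case: ne; apply/ffunP => j; apply/eqP; move/negbNE: (h j).
rewrite (bigD1_seq j) ?mem_enum ?enum_uniq //= phiF_factor (negbTE nj).
by rewrite mul0r.
Qed.

Lemma phi_surj (f : pmapM M -> C) : exists a, forall s, phiF a s = f s.
Proof.
exists (flatten [seq fscale (f s) (ind s) | s <- enum {ffun 'I_M -> option 'I_M}]).
move=> t; rewrite phiF_flatten big_map.
rewrite (bigD1_seq t) ?mem_enum ?enum_uniq //= phiF_scale phiF_ind eqxx mulr1.
rewrite big1 ?addr0 // => s st.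
by rewrite phiF_scale phiF_ind eq_sym (negbTE st) mulr0.
Qed.

Lemma phi2_def (t : tsum R M) s u :
  phi2 t s u = \sum_(x <- t) x.1 * (phiW R x.2.1 s * phiW R x.2.2 u).
Proof. by apply: eq_bigr => x _; rewrite mulrA. Qed.

Lemma deltaW_main w s u :
  \sum_(ks <- allseqs M (size w))
     phiW R [seq (x.1.1, x.2) | x <- zip w ks] s *
     phiW R [seq (x.2, x.1.2) | x <- zip w ks] u = phiW R w (ppcomp s u).
Proof.
elim: w => [|x w IH] /=.
  by rewrite big_cons big_nil /= !phiW_nil mulr1 addr0.
rewrite big_allpairs_dep /=.
under eq_bigr => k _ do under eq_bigr => ks _ do
  rewrite /= !phiW_cons /= mulrACA.
under eq_bigr => k _ do rewrite -mulr_sumr IH.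
rewrite -mulr_suml phiW_cons; congr (_ * _).
rewrite /ppcomp ffunE; case E: (u x.2) => [k0|] /=.
  rewrite (bigD1_seq k0) ?mem_enum ?enum_uniq //= eqxx mulr1.
  rewrite big1 ?addr0 // => k kk.
  have -> : (Some k0 == Some k) = false by apply/eqP => -[e]; rewrite e eqxx in kk.
  by rewrite mulr0.
by rewrite big1 // => k _; rewrite mulr0.
Qed.

Lemma phi2_deltaW w s u : phi2 (deltaW R w) s u = phiW R w (ppcomp s u).
Proof.
rewrite phi2_def /deltaW big_map -deltaW_main; apply: eq_bigr => ks _ /=.
by rewrite mul1r.
Qed.

Lemma phi2_deltaF a s u : phi2 (deltaF a) s u = phiF a (ppcomp s u).
Proof.
rewrite /deltaF phi2_def big_flatten big_map /phiF; apply: eq_bigr => x _.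
rewrite big_map -phi2_deltaW phi2_def mulr_sumr; apply: eq_bigr => y _ /=.
by rewrite -mulrA.
Qed.

Lemma phi2_coef (t : tsum R M) r s u : uniq r -> {subset map snd t <= r} ->
  phi2 t s u = \sum_(p <- r) tcoef t p * (phiW R p.1 s * phiW R p.2 u).
Proof.
move=> ur sub; rewrite phi2_def /tcoef.
under [RHS]eq_bigr => p _ do rewrite mulr_suml big_mkcond.
rewrite exchange_big /=; apply: eq_big_seq => x xt.
have xr : x.2 \in r by apply: sub; apply: map_f.
rewrite (bigD1_seq x.2) //= eqxx big1 ?addr0 // => p px.
by rewrite eq_sym (negbTE px).
Qed.

Lemma phi2_tEq (t1 t2 : tsum R M) s u : tEq t1 t2 -> phi2 t1 s u = phi2 t2 s u.
Proof.
move=> e; set r := undup (map snd (t1 ++ t2)).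
have ur : uniq r by apply: undup_uniq.
rewrite (@phi2_coef t1 r) ?(@phi2_coef t2 r) //.
- by apply: eq_bigr => p _; rewrite e.
- by move=> p pt; rewrite mem_undup map_cat mem_cat pt orbT.
- by move=> p pt; rewrite mem_undup map_cat mem_cat pt.
Qed.

Lemma phi2_cat (t1 t2 : tsum R M) s u : phi2 (t1 ++ t2) s u = phi2 t1 s u + phi2 t2 s u.
Proof. by rewrite /phi2 big_cat. Qed.

Lemma phi2_flatten (l : seq (tsum R M)) s u :
  phi2 (flatten l) s u = \sum_(t <- l) phi2 t s u.
Proof. by rewrite /phi2 big_flatten. Qed.

Lemma phi2_tensL w b s u : phi2 (tensL w b) s u = phiW R w s * phiF b u.
Proof.
rewrite /phi2 /tensL big_map mulr_sumr; apply: eq_bigr => x _ /=.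
by rewrite mulrAC mulrC.
Qed.

Lemma phi2_tensR b w s u : phi2 (tensR b w) s u = phiF b s * phiW R w u.
Proof. by rewrite /phi2 /tensR big_map mulr_suml. Qed.

End Phi.

Section Mat.
Variables (R : realType) (M N : nat).
Local Notation C := R[i].

Definition cst (xi : 'cV[C]_N) : 'M[C]_(1,N) := (map_mx Num.conj xi)^T.

Lemma Proj_mul (xi eta : 'cV[C]_N) :
  Proj xi *m Proj eta =
  ((\sum_a `|xi a ord0| ^+ 2)^-1 * (\sum_a `|eta a ord0| ^+ 2)^-1) *:
    (xi *m (cst xi *m eta) *m cst eta).
Proof.
rewrite /Proj /cst -scalemxAl -scalemxAr scalerA !mulmxA.
by [].
Qed.

Lemma cst_self (xi : 'cV[C]_N) : cst xi *m xi = (\sum_a `|xi a ord0| ^+ 2)%:M.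
Proof.
rewrite [LHS]mx11_scalar; congr (_%:M); rewrite !mxE.
by apply: eq_bigr => a _; rewrite !mxE normCK mulrC.
Qed.

Lemma Proj_idem (xi : 'cV[C]_N) : Proj xi *m Proj xi = Proj xi.
Proof.
rewrite Proj_mul cst_self mul_mx_scalar -scalemxAl scalerA /Proj.
set s := \sum_a _; congr (_ *: _).
have [->|nz] := eqVneq s 0; first by rewrite invr0 !mul0r.
by rewrite mulfVK ?invr_eq0.
Qed.

Lemma Proj_orth (xi eta : 'cV[C]_N) : cst xi *m eta = 0 -> Proj xi *m Proj eta = 0.
Proof. by move=> h; rewrite Proj_mul h mulmx0 mul0mx scaler0. Qed.

Lemma inv_norm1 (y : C) : `|y| = 1 -> y^-1 = y^*.
Proof. by move=> h; rewrite invC_norm h expr1n invr1 mul1r. Qed.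

Lemma unit_norm1 (y : C) : `|y| = 1 -> y * y^* = 1.
Proof. by move=> h; rewrite -normCK h expr1n. Qed.

Lemma term1 (x y z : C) : `|y| = 1 -> (x / y)^* * (z / y) = z * x^*.
Proof.
move=> h; rewrite inv_norm1 // rmorphM /= conjCK.
by rewrite mulrACA unit_norm1 // mulr1 mulrC.
Qed.

Lemma term2 (x y z : C) : `|x| = 1 -> `|y| = 1 -> `|z| = 1 ->
  (x / y)^* * (x / z) = y * z^*.
Proof.
move=> hx hy hz; rewrite !inv_norm1 // rmorphM /= conjCK.
by rewrite mulrACA [x^* * x]mulrC unit_norm1 // mul1r.
Qed.

Variable H : 'M[C]_(M, N).
Hypothesis hH : partial_hadamard H.

Lemma cst_ratio i j k l :
  cst (row_ratio H i j) *m row_ratio H k l =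
  (\sum_a (H i a / H j a)^* * (H k a / H l a))%:M.
Proof.
rewrite [LHS]mx11_scalar; congr (_%:M); rewrite !mxE.
by apply: eq_bigr => a _; rewrite !mxE.
Qed.

Lemma P_orth1 i j k : i != k -> Pij H i j *m Pij H k j = 0.
Proof.
move=> ik; apply: Proj_orth; rewrite cst_ratio.
under eq_bigr => a _ do rewrite term1 ?(hH.1 j a) //.
by rewrite (hH.2 k i) ?raddf0 // eq_sym.
Qed.

Lemma P_orth2 i j k : j != k -> Pij H i j *m Pij H i k = 0.
Proof.
move=> jk; apply: Proj_orth; rewrite cst_ratio.
under eq_bigr => a _ do rewrite term2 ?(hH.1 j a) ?(hH.1 i a) ?(hH.1 k a) //.
by rewrite (hH.2 j k) ?raddf0.
Qed.

Lemma P_idem i j : Pij H i j *m Pij H i j = Pij H i j.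
Proof. exact: Proj_idem. Qed.


End Mat.

Section Char.
Variables (R : realType) (M N : nat) (H : 'M[R[i]]_(M, N)).
Local Notation C := R[i].

Lemma piF_nil : piF H [::] = 0.
Proof. by rewrite /piF big_nil. Qed.

Lemma piF_cons x a : piF H (x :: a) = x.1 *: piW H x.2 + piF H a.
Proof. by rewrite /piF big_cons. Qed.

Lemma inAlg_piF a : inAlgP H (piF H a).
Proof. by exists a. Qed.

Lemma inAlg_sc c w : inAlgP H (c *: piW H w).
Proof. by exists [:: (c, w)]; rewrite piF_cons piF_nil addr0. Qed.

Lemma inAlg_piW w : inAlgP H (piW H w).
Proof. by rewrite -(scale1r (piW H w)); apply: inAlg_sc. Qed.

Lemma inAlg0 : inAlgP H 0.
Proof. by exists [::]; rewrite piF_nil. Qed.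

Lemma chi0 chi : character H chi -> chi 0 = 0.
Proof.
case=> _ [_ [hs _]].
by rewrite -(scale0r (0 : 'M[C]_N)) hs ?mul0r //; apply: inAlg0.
Qed.

Lemma chi_piF chi (s : pmapM M) : character H chi ->
  (forall i j, s j = Some i <-> chi (Pij H i j) = 1) ->
  forall a, chi (piF H a) = phiF a s.
Proof.
move=> hc hs; have [h1 [ha [hsc hm]]] := hc.
have hW : forall w, chi (piW H w) = phiW R w s.
  elim=> [|x w IH]; first by rewrite phiW_nil.
  have Px : Pij H x.1 x.2 = piW H [:: x] by rewrite /= mulmx1.
  rewrite /= hm ?IH ?phiW_cons; last (by apply: inAlg_piW); last first.
    by rewrite Px; apply: inAlg_piW.
  congr (_ * _); set z := chi _.
  have zz : z * z = z.
    rewrite /z -hm ?Proj_idem // Px; apply: inAlg_piW.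
  case: eqP => [e|ne]; first by apply/hs; rewrite -e.
  have : z * (z - 1) = 0 by rewrite mulrBr mulr1 zz subrr.
  move/eqP; rewrite mulf_eq0 => /orP [/eqP //|]; rewrite subr_eq0 => /eqP z1.
  by case: ne; apply/hs.
elim=> [|x a IH]; first by rewrite piF_nil phiF_nil chi0.
rewrite piF_cons ha ?hsc ?IH ?hW ?phiF_cons //; try apply: inAlg_piW.
- by apply: inAlg_sc.
- by apply: inAlg_piF.
Qed.

End Char.

Section Atoms.
Variables (R : realType) (M N : nat) (H : 'M[R[i]]_(M, N)).
Local Notation C := R[i].
Hypothesis hH : partial_hadamard H.
Hypothesis hcomm : forall i j k l, Pij H i j *m Pij H k l = Pij H k l *m Pij H i j.

Local Notation T := ('I_M * 'I_M)%type.
Definition PP (p : T) : 'M[C]_N := Pij H p.1 p.2.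
Definition G (e : {ffun T -> bool}) p := if e p then PP p else 1 - PP p.
Definition E e := \prod_(p : T) G e p.

Lemma PPc p q : PP p * PP q = PP q * PP p.
Proof. by rewrite /PP -!mulmxE hcomm. Qed.

Lemma PPi p : PP p * PP p = PP p.
Proof. by rewrite /PP -mulmxE P_idem. Qed.

Lemma PG_comm e q p : PP q * G e p = G e p * PP q.
Proof.
rewrite /G; case: (e p); first exact: PPc.
by rewrite mulrBr mulrBl mulr1 mul1r PPc.
Qed.

Lemma PG_self e q : PP q * G e q = if e q then G e q else 0.
Proof.
rewrite /G; case: (e q); first exact: PPi.
by rewrite mulrBr mulr1 PPi subrr.
Qed.

Lemma P_prod e q r : q \in r ->
  PP q * \prod_(p <- r) G e p = if e q then \prod_(p <- r) G e p else 0.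
Proof.
elim: r => [//|p r IH]; rewrite big_cons.
have [<- _|qp] := eqVneq q p.
  by rewrite mulrA PG_self; case: (e q); rewrite ?mul0r.
rewrite in_cons (negbTE qp) /= => qr.
rewrite mulrA PG_comm -mulrA IH //; case: (e q) => //; by rewrite mulr0.
Qed.

Lemma P_E e q : PP q * E e = if e q then E e else 0.
Proof. by apply: P_prod; rewrite mem_index_enum. Qed.

Definition lam e (a : fsum R M) : C :=
  \sum_(x <- a) x.1 * \prod_(y <- x.2) (nat_of_bool (e y))%:R.

Lemma piW_E e w : piW H w *m E e = (\prod_(y <- w) (nat_of_bool (e y))%:R) *: E e.
Proof.
elim: w => [|x w IH]; first by rewrite /= mul1mx big_nil scale1r.
rewrite /= -mulmxA IH -scalemxAr big_cons.
have -> : Pij H x.1 x.2 *m E e = (nat_of_bool (e x))%:R *: E e.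
  by rewrite mulmxE -/(PP x) P_E; case: (e x); rewrite ?scale1r ?scale0r.
by rewrite scalerA mulrC.
Qed.

Lemma piF_E e a : piF H a *m E e = lam e a *: E e.
Proof.
rewrite /piF /lam mulmx_suml scaler_suml; apply: eq_bigr => x _.
by rewrite -scalemxAl piW_E scalerA.
Qed.

Lemma sum_E : \sum_(e : {ffun T -> bool}) E e = 1.
Proof.
rewrite /E /G -(bigA_distr_bigA (fun p (b : bool) => if b then PP p else 1 - PP p)) /=.
transitivity (\prod_(p : T) (1 : 'M[C]_N)); last by rewrite big1.
apply: eq_bigr => p _.
by rewrite big_bool /= addrC subrK.
Qed.

Lemma E_uniq1 e i j k : E e != 0 -> e (i, j) -> e (k, j) -> i = k.
Proof.
move=> nz hi hk; apply/eqP; apply: contraNT nz => ik.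
have h1 := P_E e (i, j); have h2 := P_E e (k, j); rewrite hi in h1; rewrite hk in h2.
by rewrite -h1 -h2 mulrA /PP -mulmxE P_orth1 // mul0mx.
Qed.

Lemma E_uniq2 e i j k : E e != 0 -> e (i, j) -> e (i, k) -> j = k.
Proof.
move=> nz hi hk; apply/eqP; apply: contraNT nz => jk.
have h1 := P_E e (i, j); have h2 := P_E e (i, k); rewrite hi in h1; rewrite hk in h2.
by rewrite -h1 -h2 mulrA /PP -mulmxE P_orth2 // mul0mx.
Qed.

Definition sig_e (e : {ffun T -> bool}) : pmapM M := [ffun j => [pick i | e (i, j)]].

Lemma sig_eP e i j : E e != 0 -> (sig_e e j = Some i <-> e (i, j)).
Proof.
move=> nz; rewrite /sig_e ffunE; case: pickP => [i' hi'|h].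
  split; first by case=> <-.
  by move=> hi; rewrite (E_uniq1 nz hi' hi).
by split => // hi; rewrite h in hi.
Qed.

Lemma sig_e_pperm e : E e != 0 -> is_pperm (sig_e e).
Proof.
move=> nz j k i /(sig_eP _ _ nz) hj /(sig_eP _ _ nz) hk.
exact: (E_uniq2 nz hj hk).
Qed.

Lemma E_nz_entry e : E e != 0 -> exists a b, E e a b != 0.
Proof.
move=> nz; have : [exists a, [exists b, E e a b != 0]].
  apply: contraNT nz; rewrite negb_exists => /forallP h.
  apply/eqP/matrixP => a b; rewrite mxE.
  have := h a; rewrite negb_exists => /forallP /(_ b); by rewrite negbK => /eqP.
by case/existsP => a /existsP [b hb]; exists a, b.
Qed.

Lemma sig_e_S e : E e != 0 -> charS H (sig_e e).
Proof.
move=> nz; split; first exact: sig_e_pperm.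
have [a [b nzab]] := E_nz_entry nz.
pose chi (Y : 'M[C]_N) := (Y *m E e) a b / E e a b.
have chiE : forall Z l, Z *m E e = l *: E e -> chi Z = l.
  by move=> Z l h; rewrite /chi h mxE mulfK.
have lamE : forall X, inAlgP H X -> exists l, X *m E e = l *: E e.
  by move=> X [a' ->]; exists (lam e a'); apply: piF_E.
exists chi; split; first split.
- by apply: chiE; rewrite mul1mx scale1r.
- split; first by move=> X Y _ _; rewrite /chi mulmxDl mxE mulrDl.
  split; first by move=> c X _; rewrite /chi -scalemxAl mxE mulrA.
  move=> X Y hX hY; have [lx hx] := lamE X hX; have [ly hy] := lamE Y hY.
  rewrite (chiE _ _ hx) (chiE _ _ hy); apply: chiE.
  by rewrite -mulmxA hy -scalemxAr hx scalerA mulrC.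
- move=> i j; rewrite (sig_eP _ _ nz).
  have -> : chi (Pij H i j) = (nat_of_bool (e (i, j)))%:R.
    apply: chiE; rewrite mulmxE -/(PP (i, j)) P_E.
    by case: (e (i, j)); rewrite ?scale1r ?scale0r.
  by case: (e (i, j)) => //=; split => // /eqP; rewrite eq_sym oner_eq0.
Qed.

Lemma lam_phiF e a : E e != 0 -> lam e a = phiF a (sig_e e).
Proof.
move=> nz; apply: eq_bigr => x _; congr (_ * _); apply: eq_bigr => y _.
case: y => i j; case: eqP => [/(sig_eP _ _ nz) -> //|ne].
by case E': (e (i, j)) => //; case: ne; apply/(sig_eP _ _ nz).
Qed.

Lemma factorize a : (forall s, charS H s -> phiF a s = 0) -> piF H a = 0.
Proof.
move=> h; rewrite -[piF H a]mulmx1 idmxE -sum_E mulmx_sumr big1 // => e _.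
rewrite piF_E; have [->|nz] := eqVneq (E e) 0; first by rewrite scaler0.
by rewrite lam_phiF // h ?scale0r //; apply: sig_e_S.
Qed.

End Atoms.

Lemma foldl_pperm (M : nat) (l : seq (pmapM M)) s0 :
  is_pperm s0 -> (forall t, t \in l -> is_pperm t) -> is_pperm (foldl (@ppcomp M) s0 l).
Proof.
elim: l s0 => [//|t l IH] s0 h0 hl /=.
apply: IH => [|u ul]; last by apply: hl; rewrite in_cons ul orbT.
by apply: pperm_comp => //; apply: hl; rewrite mem_head.
Qed.

Lemma minimal (R : realType) (M N : nat) (H : 'M[R[i]]_(M, N)) I :
  factor_kernel H I -> forall a, I a -> forall s, gen_sg (charS H) s -> phiF a s = 0.
Proof.
move=> [_ [_ [_ [_ [_ [_ [_ [_ [_ [hco hpi]]]]]]]]]].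
have base : forall a s, charS H s -> I a -> phiF a s = 0.
  move=> a s [_ [chi [hc hs]]] Ia.
  by rewrite -(chi_piF hc hs) (hpi a Ia) (chi0 hc).
move=> a Ia s [s0 [l [S0 [Sl ->]]]].
elim/last_ind: l Sl a Ia => [|l t IH] Sl a Ia; first exact: base.
rewrite foldl_rcons -phi2_deltaF.
have [L [Rr [hL [hR heq]]]] := hco a Ia.
rewrite (phi2_tEq _ _ heq) phi2_cat !phi2_flatten !big_map.
have St : charS H t by apply: Sl; rewrite mem_rcons mem_head.
have Sl' : forall u, u \in l -> charS H u.
  by move=> u ul; apply: Sl; rewrite mem_rcons in_cons ul orbT.
rewrite !big1_seq ?addr0 // => p /andP [_ pin]; rewrite ?phi2_tensL ?phi2_tensR.
  by rewrite IH ?mul0r //; apply: hR.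
by rewrite base ?mulr0 //; apply: hL.
Qed.

Theorem proposition2p3 (R : realType) (M N : nat) (H : 'M[R[i]]_(M, N)) :
  partial_hadamard H ->
  (forall i j k l, Pij H i j *m Pij H k l = Pij H k l *m Pij H i j) ->
  let S := charS H in
  let GS := gen_sg S in
  (* Phi : tilde A_s(M) -> C(<S>) is a well-defined unital *-morphism ... *)
  (forall s, GS s -> is_pperm s) /\
  (forall s, GS s -> phiF [:: (1 : R[i], [::])] s = 1) /\
  (forall (a b : fsum R M) s, GS s -> phiF (a ++ b) s = phiF a s + phiF b s) /\
  (forall c (a : fsum R M) s, GS s -> phiF (fscale c a) s = c * phiF a s) /\
  (forall w (a : fsum R M) s, GS s -> phiF (lmulW w a) s = phiW R w s * phiF a s
                      /\ phiF (rmulW w a) s = phiF a s * phiW R w s) /\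
  (forall (a : fsum R M) s, GS s -> phiF (fstar a) s = (phiF a s)^*) /\
  (forall (i j : 'I_M) s, GS s ->
     phiF [:: (1 : R[i], [:: (i, j); (i, j)]); (-1, [:: (i, j)])] s = 0) /\
  (forall (i j k : 'I_M) s, j != k -> GS s -> phiF [:: (1 : R[i], [:: (i, j); (i, k)])] s = 0) /\
  (forall (i j k : 'I_M) s, i != k -> GS s -> phiF [:: (1 : R[i], [:: (i, j); (k, j)])] s = 0) /\
  (* ... which is surjective onto C(<S>) ... *)
  (forall f : pmapM M -> R[i], exists a : fsum R M, forall s, GS s -> phiF a s = f s) /\
  (* ... preserves comultiplication, Delta(f)(s,t) = f(s t) ... *)
  (forall (a : fsum R M) s t, GS s -> GS t -> phi2 (deltaF a) s t = phiF a (ppcomp s t)) /\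
  (* ... factorizes pi_H = rho o Phi ... *)
  (forall a : fsum R M, (forall s, GS s -> phiF a s = 0) -> piF H a = 0) /\
  (* ... and is minimal: every other factorization's kernel is contained in ker Phi *)
  (forall I : fsum R M -> Prop, factor_kernel H I -> forall a, I a -> forall s, GS s -> phiF a s = 0).
Proof.
move=> hH hcomm S GS.
have GSpp : forall s, GS s -> is_pperm s.
  move=> s [s0 [l [S0 [Sl ->]]]]; apply: foldl_pperm; first exact: S0.1.
  by move=> t tl; exact: (Sl t tl).1.
have SGS : forall s, S s -> GS s by move=> s Ss; exists s, [::].
split; first exact: GSpp.
split; first by move=> s _; rewrite phiF_cons phiF_nil phiW_nil mulr1 addr0.
split; first by move=> a b s _; apply: phiF_cat.
split; first by move=> c a s _; apply: phiF_scale.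
split; first by move=> w a s _; rewrite phiF_lmul phiF_rmul.
split; first by move=> a s _; apply: phiF_star.
split.
  move=> i j s _; rewrite !phiF_cons phiF_nil !phiW_cons phiW_nil /=.
  by case: eqP => _; rewrite ?(mul1r, mulr1, mul0r, mulr0, addr0, mulN1r, subrr).
split.
  move=> i j k s jk /GSpp pp; rewrite !phiF_cons phiF_nil !phiW_cons phiW_nil /=.
  case: eqP => [hj|_]; last by rewrite !(mul1r, mul0r, addr0).
  case: eqP => [hk|_]; last by rewrite !(mul1r, mulr0, mul0r, addr0).
  by rewrite (pp _ _ _ hj hk) eqxx in jk.
split.
  move=> i j k s ik _; rewrite !phiF_cons phiF_nil !phiW_cons phiW_nil /=.
  case: eqP => [hj|_]; last by rewrite !(mul1r, mul0r, addr0).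
  case: eqP => [hk|_]; last by rewrite !(mul1r, mulr0, mul0r, addr0).
  by move: hk; rewrite hj => -[e]; rewrite e eqxx in ik.
split.
  by move=> f; have [a ha] := phi_surj f; exists a => s _; apply: ha.
split; first by move=> a s t _ _; apply: phi2_deltaF.
split.
  move=> a h; apply: (factorize hH hcomm) => s Ss; apply: h; exact: SGS.
exact: minimal.
Qed.
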